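(* Let $\varphi\colon\mathcal{M}\to\mathcal{X}$ be a smooth lift that does not satisfy ''2 $\Rightarrow$ 1'' at $y\in\mathcal{M}$, and let $x=\varphi(y)$. Then $W_y\setminus(\mathrm{T}_x\mathcal{X})^*\neq\emptyset$, and for every $w$ in this set there exists $\alpha>0$ such that, with $f(x')=\langle w,x'\rangle+\tfrac{\alpha}{2}\|x'-x\|^2$, the point $y$ is 2-critical for $g=f\circ\varphi$ but $x$ is not stationary for $f$ on $\mathcal{X}$.
   Context: $\mathcal{E}$ is a finite-dimensional real inner product space, $\mathcal{M}$ a smooth manifold, and $\varphi\colon\mathcal{M}\to\mathcal{E}$ smooth with $\varphi(\mathcal{M})=\mathcal{X}$. Tangent cone: $\mathrm{T}_x\mathcal{X}=\{\lim(x_i-x)/\tau_i: x_i\in\mathcal{X},\tau_i>0,\tau_i\to0\}$; $K^*=\{u:\langle u,v\rangle\ge0\ \forall v\in K\}$; $x$ is stationary for $f$ on $\mathcal{X}$ if $\nabla f(x)\in(\mathrm{T}_x\mathcal{X})^*$. $y$ is 2-critical for $g=f\circ\varphi$ if $(g\circ c)'(0)=0$ and $(g\circ c)''(0)\ge0$ for all smooth curves $c$ in $\mathcal{M}$ with $c(0)=y$. ''2 $\Rightarrow$ 1'' at $y$: for every twice differentiable $f\colon\mathcal{E}\to\mathbb{R}$, if $y$ is 2-critical for $g$ then $\varphi(y)$ is stationary. $W_y$ is the set of $w\in\mathcal{E}$ for which some twice differentiable $f\colon\mathcal{E}\to\mathbb{R}$ has $\nabla f(x)=w$ and $y$ 2-critical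 for $f\circ\varphi$. *)

(* Defs.v *)
From HB Require Import structures.
From mathcomp Require Import all_boot all_order all_algebra.
From mathcomp Require Import all_classical all_reals all_analysis.
Set Implicit Arguments. Unset Strict Implicit. Unset Printing Implicit Defensive.
Import Order.TTheory GRing.Theory Num.Theory.
Import numFieldNormedType.Exports.
Local Open Scope classical_set_scope.
Local Open Scope ring_scope.

Section Defs.
Variable R : realType.

Fixpoint iter_dir_deriv (V W : normedModType R) (vs : seq V) (f : V -> W)
  : V -> W :=
  match vs with
  | [::] => f
  | v :: vs' => fun x => 'D_v (iter_dir_deriv vs' f) x
  end.

Definition smooth_on (V W : normedModType R) (U : set V) (f : V -> W) :=
  open U /\
  forall vs : seq V,
    (forall x v, U x -> derivable (iter_dir_deriv vs f) x v) /\
    {within U, continuous (iter_dir_deriv vs f)}.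

Record chart (m : nat) (M : Type) := Chart {
  cdom : set M;
  cmap : M -> 'rV[R]_m;
  cinv : 'rV[R]_m -> M
}.

Definition is_chart (m : nat) (M : topologicalType) (a : chart m M) :=
  [/\ open (cdom a), open (cmap a @` cdom a),
      (forall p, cdom a p -> cinv a (cmap a p) = p),
      (forall z, (cmap a @` cdom a) z -> cmap a (cinv a z) = z) &
      {within cdom a, continuous (cmap a)} /\
      {within cmap a @` cdom a, continuous (cinv a)}].

Definition smooth_atlas (m : nat) (M : topologicalType) (A : set (chart m M)) :=
  [/\ hausdorff_space M, @second_countable M,
      (forall a, A a -> is_chart a),
      (forall p : M, exists2 a, A a & cdom a p) &
      (forall a b, A a -> A b ->
         smooth_on (cmap a @` (cdom a `&` cdom b)) (cmap b \o cinv a))].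

Definition smooth_map (m n : nat) (M : topologicalType) (A : set (chart m M))
  (phi : M -> 'rV[R]_n) :=
  forall a, A a -> smooth_on (cmap a @` cdom a) (phi \o cinv a).

Definition smooth_curve (m : nat) (M : topologicalType) (A : set (chart m M))
  (c : R^o -> M) :=
  continuous c /\
  forall a, A a -> smooth_on (c @^-1` cdom a) (cmap a \o c).

Definition dotp (n : nat) (u v : 'rV[R]_n) : R := (u *m v^T) 0 0.

(* gradient w.r.t. the inner product dotp: <grad f x, v> = Df(x)[v] *)
Definition grad (n : nat) (f : 'rV[R]_n -> R^o) (x : 'rV[R]_n) : 'rV[R]_n :=
  \row_(i < n) ('d f x (delta_mx 0 i : 'rV[R]_n) : R).

Definition twice_differentiable (n : nat) (f : 'rV[R]_n -> R^o) :=
  (forall x, differentiable f x) /\ (forall x, differentiable (grad f) x).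

Definition tangent_cone (n : nat) (X : set 'rV[R]_n) (x : 'rV[R]_n)
  : set 'rV[R]_n :=
  [set v | exists (xs : nat -> 'rV[R]_n) (tau : nat -> R),
      [/\ (forall i, X (xs i)), (forall i, 0 < tau i),
          tau @ \oo --> (0 : R) &
          (fun i => (tau i)^-1 *: (xs i - x)) @ \oo --> v]].

Definition dual_cone (n : nat) (K : set 'rV[R]_n) : set 'rV[R]_n :=
  [set u | forall v, K v -> 0 <= dotp u v].

Definition stationary (n : nat) (X : set 'rV[R]_n) (f : 'rV[R]_n -> R^o)
  (x : 'rV[R]_n) := dual_cone (tangent_cone X x) (grad f x).

Definition two_critical (m n : nat) (M : topologicalType) (A : set (chart m M))
  (phi : M -> 'rV[R]_n) (f : 'rV[R]_n -> R^o) (y : M) :=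
  forall c : R^o -> M, smooth_curve A c -> c 0 = y ->
    let h : R^o -> R^o := fun t => f (phi (c t)) in
    derive1 h 0 = 0 /\ 0 <= derive1 (derive1 h) 0.

Definition two_implies_one (m n : nat) (M : topologicalType)
  (A : set (chart m M)) (phi : M -> 'rV[R]_n) (y : M) :=
  forall f : 'rV[R]_n -> R^o, twice_differentiable f ->
    two_critical A phi f y -> stationary (phi @` setT) f (phi y).

Definition W_set (m n : nat) (M : topologicalType) (A : set (chart m M))
  (phi : M -> 'rV[R]_n) (y : M) : set 'rV[R]_n :=
  [set w | exists f : 'rV[R]_n -> R^o,
      [/\ twice_differentiable f, grad f (phi y) = w & two_critical A phi f y]].

End Defs.

(* Main.v *)
Require Import Defs.
From HB Require Import structures.
From mathcomp Require Import all_boot all_order all_algebra.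
From mathcomp Require Import all_classical all_reals all_analysis.
From mathcomp Require Import ring lra.
Import Order.TTheory GRing.Theory Num.Theory.
Import numFieldNormedType.Exports.
Local Open Scope classical_set_scope.
Local Open Scope ring_scope.
Section Helpers.
Variable R : realType.

Definition ev (k : nat) (j : 'I_k) : 'rV[R]_k := delta_mx 0 j.
Arguments ev {k} j.

Lemma dlin (W : normedModType R) k (G : 'rV[R]_k -> W) z v :
  differentiable G z -> 'd G z v = \sum_j v 0 j *: 'D_(ev j) G z.
Proof.
move=> dG; rewrite {1}(row_sum_delta v) linear_sum; apply: eq_bigr => j _.
by rewrite linearZ /= deriveE.
Qed.

Lemma dotpE n (u v : 'rV[R]_n) : dotp u v = \sum_j u 0 j * v 0 j.
Proof. by rewrite /dotp mxE; apply: eq_bigr => j _; rewrite mxE. Qed.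

Lemma dgrad n (f : 'rV[R]_n -> R^o) u v : differentiable f u ->
  'd f u v = dotp (grad f u) v.
Proof.
move=> df; rewrite dlin // dotpE; apply: eq_bigr => j _.
by rewrite mxE deriveE // mulrC.
Qed.

Lemma rV_coord_le k (u : 'rV[R]_k) l : `|u 0 l| <= `|u|.
Proof.
rewrite [leRHS]/Num.Def.normr/= mx_normrE.
exact: (le_bigmax _ (fun ij : 'I_1 * 'I_k => `|u ij.1 ij.2|) (0, l)).
Qed.

Lemma rV_norm_le k (u : 'rV[R]_k) c : 0 <= c -> (forall l, `|u 0 l| <= c) ->
  `|u| <= c.
Proof.
move=> c0 H; rewrite [leLHS]/Num.Def.normr/= mx_normrE.
by apply: bigmax_le => // -[i l] _ /=; rewrite ord1.
Qed.

Lemma MVI (g : R -> R) a b c K : a <= b ->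
  (forall r, a <= r <= b -> derivable g r 1 /\ `|derive1 g r - c| <= K) ->
  `|g b - g a - c * (b - a)| <= K * (b - a).
Proof.
move=> ab H.
have H1 : forall x, x \in `]a, b[ -> is_derive x 1 g (derive1 g x).
  move=> x; rewrite in_itv /= => /andP[ax xb].
  have [dx _] := H x (introT andP (conj (ltW ax) (ltW xb))).
  by rewrite derive1E; apply: derivableP.
have H2 : {within `[a, b], continuous g}.
  apply: derivable_within_continuous => x; rewrite in_itv /= => /andP[ax xb].
  by have [] := H x (introT andP (conj ax xb)).
have [d cab ->] := MVT_segment ab H1 H2.
rewrite -mulrBl normrM (ger0_norm (x := b - a)) ?subr_ge0 //; apply: ler_wpM2r.
  by rewrite subr_ge0.
by move: cab; rewrite in_itv /= => /H [].
Qed.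

Lemma line_derive (V W : normedModType R) (G : V -> W) z v r :
  derivable G (r *: v + z) v ->
  derivable (fun s : R => G (s *: v + z)) r 1 /\
  'D_1 (fun s : R => G (s *: v + z)) r = 'D_v G (r *: v + z).
Proof.
rewrite /derivable /derive.
have -> : (fun h : R => h^-1 *: (((fun s : R => G (s *: v + z)) \o shift r) (h *: 1)
           - G (r *: v + z))) =
          (fun h : R => h^-1 *: ((G \o shift (r *: v + z)) (h *: v) - G (r *: v + z))).
  apply/funext => h /=; congr (_ *: (G _ - _)).
  by rewrite -[h *: 1]/(h * 1) mulr1 scalerDl addrA.
by [].
Qed.
Arguments line_derive {V W} G z v r _.

Definition Pk k (i : nat) (h : 'rV[R]_k) : 'rV[R]_k :=
  \row_l (if (l < i)%N then h 0 l else 0).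

Lemma Pk0 k h : Pk k 0 h = 0.
Proof. by apply/rowP => l; rewrite !mxE. Qed.

Lemma Pkk k h : Pk k k h = h.
Proof. by apply/rowP => l; rewrite !mxE ltn_ord. Qed.

Lemma PkS k i (l0 : 'I_k) h : nat_of_ord l0 = i ->
  Pk k i.+1 h = Pk k i h + h 0 l0 *: ev l0.
Proof.
move=> l0i; apply/rowP => l; rewrite !mxE eqxx /= ltnS leq_eqVlt.
have [ll0|nll0] := eqVneq l l0.
  by rewrite ll0 l0i eqxx ltnn /= mulr1 add0r.
have -> : (l == i :> nat) = false.
  by apply/negbTE; apply: contra nll0 => /eqP li; apply/eqP/val_inj; rewrite /= li.
by rewrite /= mulr0 addr0.
Qed.

Lemma Pk_norm k i h (l0 : 'I_k) s : nat_of_ord l0 = i -> `|s| <= `|h| ->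
  `|Pk k i h + s *: ev l0| <= `|h|.
Proof.
move=> l0i sh; apply: rV_norm_le => // l; rewrite !mxE eqxx /=.
have [ll0|nll0] := eqVneq l l0.
  by rewrite ll0 l0i ltnn mulr1 add0r.
rewrite mulr0 addr0; case: ifP => _; last by rewrite normr0.
exact: rV_coord_le.
Qed.

Lemma C1 k (G : 'rV[R]_k -> R) (z : 'rV[R]_k) (g : 'I_k -> 'rV[R]_k -> R) :
  (forall l, {for z, continuous (g l)}) ->
  (\forall u \near z, forall l, derivable G u (ev l) /\ 'D_(ev l) G u = g l u) ->
  differentiable G z.
Proof.
move=> gc Gd.
pose L := fun h : 'rV[R]_k => (\sum_l h 0 l * g l z : R).
have Llin : linear L.
  move=> a u v; rewrite /L scaler_sumr -big_split; apply: eq_bigr => l _ /=.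
  rewrite !mxE mulrDl; congr (_ + _); rewrite -mulrA; done.
pose LM := GRing.isLinear.Build _ _ _ _ _ Llin.
pose LL : {linear 'rV[R]_k -> R} := HB.pack L LM.
have Lc : continuous LL.
  move=> x; apply: differentiable_continuous.
  have -> : (LL : _ -> _) = \sum_l (( *:%R ^~ (g l z)) \o (fun h : 'rV[R]_k => h 0 l)).
    by apply/funext => h; rewrite /= /L fct_sumE.
  apply: differentiable_sum => l; apply: differentiable_comp => //.
  exact: differentiable_coord.
have LLE : forall h, LL h = L h by [].
clearbody LL; clear LM Llin.
have Ho : G \o shift z = cst (G z) + LL +o_ (0 : 'rV[R]_k) id.
  apply/eqaddoP => eps eps0.
  set ep := eps / k.+1%:R.
  have ep0 : 0 < ep by rewrite divr_gt0 // ltr0Sn.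
  have Hn : \forall u \near z,
      (forall l, derivable G u (ev l) /\ 'D_(ev l) G u = g l u) /\
      (forall l, `|g l z - g l u| <= ep).
    near=> u; split; first by near: u; exact: Gd.
    near: u; apply: filter_forall => l.
    by move/cvgrPdist_le: (gc l) => /(_ ep ep0).
  move/nbhs_ballP: Hn => [d /= d0 Hd].
  apply/nbhs_ballP; exists d => // h; rewrite -ball_normE /= sub0r normrN => hd.
  have key : forall i (l0 : 'I_k), nat_of_ord l0 = i ->
     `|G (h 0 l0 *: ev l0 + (Pk k i h + z)) - G (Pk k i h + z) - h 0 l0 * g l0 z|
       <= ep * `|h|.
    move=> i l0 l0i.
    set w := Pk k i h + z.
    pose g1 := fun s : R => G (s *: ev l0 + w).
    have Hs : forall s, `|s| <= `|h 0 l0| ->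
        derivable g1 s 1 /\ `|derive1 g1 s - g l0 z| <= ep.
      move=> s sh.
      have us : ball z d (s *: ev l0 + w).
        rewrite -ball_normE /= /w.
        rewrite opprD addrCA opprD (addrCA z) subrr addr0 -opprD addrC normrN.
        apply: le_lt_trans hd; apply: Pk_norm => //.
        by apply: (le_trans sh); apply: rV_coord_le.
      have [/(_ l0) [Hder HD] Hc] := Hd _ us.
      have [D1 D2] := line_derive _ _ _ _ Hder.
      split => //.
      by rewrite derive1E D2 HD distrC.
    have hl : `|h 0 l0| <= `|h| by exact: rV_coord_le.
    have g10 : g1 0 = G w by rewrite /g1 scale0r add0r.
    have [h0|h0] := leP 0 (h 0 l0).
      have H := @MVI g1 0 (h 0 l0) (g l0 z) ep h0.
      have E : G (h 0 l0 *: ev l0 + w) - G w - h 0 l0 * g l0 z =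
               g1 (h 0 l0) - g1 0 - g l0 z * (h 0 l0 - 0).
        by rewrite g10 subr0 mulrC.
      rewrite E; apply: (le_trans (H _)).
        move=> r /andP[r0 rh]; apply: Hs.
        by rewrite !ger0_norm // (le_trans r0 rh).
      by rewrite subr0; apply: ler_wpM2l; [exact: ltW | rewrite -(ger0_norm h0)].
    have H := @MVI g1 (h 0 l0) 0 (g l0 z) ep (ltW h0).
    have E : G (h 0 l0 *: ev l0 + w) - G w - h 0 l0 * g l0 z =
             - (g1 0 - g1 (h 0 l0) - g l0 z * (0 - h 0 l0)).
      by rewrite g10 /g1 sub0r mulrN opprK opprD opprB mulrC.
    rewrite E normrN; apply: (le_trans (H _)).
      move=> r /andP[hr r0]; apply: Hs.
      by rewrite !ler0_norm ?lerN2 // (ltW h0).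
    by rewrite sub0r; apply: ler_wpM2l; [exact: ltW | rewrite -(ltr0_norm h0)].
  have claim : forall i, (i <= k)%N ->
     `|G (Pk k i h + z) - G z - \sum_(l < k | (l < i)%N) h 0 l * g l z|
       <= i%:R * ep * `|h|.
    elim => [|i IH] ik.
      by rewrite Pk0 add0r subrr big_pred0 // subr0 normr0 !mul0r.
    pose l0 : 'I_k := Ordinal ik.
    rewrite (@PkS k i l0 h erefl) (bigD1 l0) /=; last by rewrite ltnS.
    rewrite (eq_bigl (fun l : 'I_k => (l < i)%N)); last first.
      move=> l; rewrite ltnS leq_eqVlt.
      have [->|nl] := eqVneq l l0; first by rewrite ltnn /= eqxx.
      have -> : (l == i :> nat) = false.
        by apply/negbTE; apply: contra nl => /eqP li; apply/eqP/val_inj; rewrite /= li.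
      by rewrite /= andbT.
    have -> : G (Pk k i h + h 0 l0 *: ev l0 + z) - G z -
        (h 0 l0 * g l0 z + \sum_(l < k | (l < i)%N) h 0 l * g l z) =
        (G (h 0 l0 *: ev l0 + (Pk k i h + z)) - G (Pk k i h + z) - h 0 l0 * g l0 z)
        + (G (Pk k i h + z) - G z - \sum_(l < k | (l < i)%N) h 0 l * g l z).
      have -> : Pk k i h + h 0 l0 *: ev l0 + z = h 0 l0 *: ev l0 + (Pk k i h + z).
        by rewrite (addrC (Pk k i h)) addrA.
      move: (G (h 0 l0 *: ev l0 + (Pk k i h + z))) (G (Pk k i h + z)) (G z) => a b c.
      move: (h 0 l0 * g l0 z) (\sum_(l < k | (l < i)%N) h 0 l * g l z) => t S.
      ring.
    apply: (le_trans (ler_normD _ _)).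
    rewrite -nat1r mulrDl mulrDl mul1r; apply: lerD; first exact: key.
    exact: IH (ltnW ik).
  have := claim k (leqnn k); rewrite Pkk.
  rewrite (eq_bigl xpredT); last by move=> l; rewrite ltn_ord.
  move=> H; change (`|G (h + z) - (G z + LL h)| <= eps * `|h|); rewrite LLE opprD addrA; apply: (le_trans H).
  apply: ler_wpM2r => //; rewrite /ep mulrA ler_pdivrMr ?ltr0Sn // mulrC.
  by rewrite ler_wpM2l ?(ltW eps0) // ler_nat.

have dd := diff_unique Lc Ho.
by apply/diff_locallyP; rewrite dd; split.
Unshelve. all: by end_near. Qed.

Lemma H2 n (f : 'rV[R]_n -> R^o) (p : R -> 'rV[R]_n) :
  twice_differentiable f ->
  (\forall t \near 0, derivable p t 1) -> derivable (derive1 p) 0 1 ->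
  derive1 (fun t => f (p t)) 0 = dotp (grad f (p 0)) (derive1 p 0) /\
  derive1 (derive1 (fun t => f (p t))) 0 =
     dotp ('d (grad f) (p 0) (derive1 p 0)) (derive1 p 0)
     + dotp (grad f (p 0)) (derive1 (derive1 p) 0).
Proof.
move=> [df dg] dp dp2.
have D1 : forall t, derivable p t 1 ->
    derive1 (fun t => f (p t)) t = dotp (grad f (p t)) (derive1 p t).
  move=> t /derivable1_diffP dpt.
  have dc : differentiable (f \o p) t := differentiable_comp dpt (df _).
  rewrite -[(fun t => f (p t))]/(f \o p) derive1E' // diff_comp //=.
  by rewrite dgrad // -derive1E'.
split; first by apply: D1; exact: (nbhs_singleton dp).
pose k := fun t => dotp (grad f (p t)) (derive1 p t).
have Dk : \forall t \near 0, derive1 (fun t => f (p t)) t = k t.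
  by near=> t; apply: D1; near: t.
rewrite derive1E (near_eq_derive _ Dk) /k.
have dp0 : differentiable p 0 by apply/derivable1_diffP; exact: (nbhs_singleton dp).
have dgp : differentiable (grad f \o p) 0 := differentiable_comp dp0 (dg _).
have dgp' : derivable (grad f \o p) 0 1 by apply/derivable1_diffP.
have Ea : forall j, derivable (fun t => grad f (p t) 0 j) 0 1 /\
    'D_1 (fun t => grad f (p t) 0 j) 0 = 'd (grad f) (p 0) (derive1 p 0) 0 j.
  move=> j; split; first by move/derivable_mxP : dgp' => /(_ 0 j).
  have E := derive_mx dgp'.
  have := congr1 (fun M : 'rV[R]_n => M 0 j) E; rewrite /= mxE => <-.
  by rewrite deriveE // diff_comp //= -derive1E'.
have Eb : forall j, derivable (fun t => derive1 p t 0 j) 0 1 /\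
    'D_1 (fun t => derive1 p t 0 j) 0 = derive1 (derive1 p) 0 0 j.
  move=> j; split; first by move/derivable_mxP : dp2 => /(_ 0 j).
  by rewrite derive1E (derive_mx dp2) mxE.
have -> : (fun t => dotp (grad f (p t)) (derive1 p t)) =
    \sum_j (fun t => grad f (p t) 0 j * derive1 p t 0 j).
  by apply/funext => t; rewrite dotpE fct_sumE.
rewrite derive_sum; last first.
  by move=> j; apply: derivableM; [exact: (Ea j).1 | exact: (Eb j).1].
rewrite !dotpE -big_split; apply: eq_bigr => j _ /=.
rewrite -[(fun t => _ * _)]/((fun t => grad f (p t) 0 j) * (fun t => derive1 p t 0 j)).
rewrite deriveM; [|exact: (Ea j).1 | exact: (Eb j).1].
rewrite (Ea j).2 (Eb j).2 addrC; congr (_ + _); exact: mulrC.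
Unshelve. all: by end_near. Qed.

Lemma open_near (T : topologicalType) (U : set T) t :
  open U -> U t -> \forall s \near t, U s.
Proof. by rewrite openE => /(_ t) H /H. Qed.

Lemma compdiff m n (V : set 'rV[R]_m) (H : 'rV[R]_m -> 'rV[R]_n) z i j :
  open V -> V z -> (forall u v, V u -> derivable H u v) ->
  (forall l, {within V, continuous ('D_(ev l) H)}) ->
  differentiable (fun u => H u i j : R) z.
Proof.
move=> Vo Vz Hd Hc.
apply: (@C1 m _ z (fun l u => 'D_(ev l) H u i j)).
  move=> l; have := Hc l; rewrite continuous_open_subspace // => /(_ z).
  rewrite inE => /(_ Vz) hz.
  exact: (continuous_comp hz (@coord_continuous _ _ _ i j _)).
have := @open_near _ V z Vo Vz; apply: filterS => u Vu l; split.
  by move/derivable_mxP : (Hd u (ev l) Vu) => /(_ i j).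
by rewrite (derive_mx (Hd u (ev l) Vu)) mxE.
Qed.

Lemma curve_rep m n (M : topologicalType) (A : set (chart R m M))
  (phi : M -> 'rV[R]_n) (c : R^o -> M) :
  smooth_atlas A -> smooth_map A phi -> smooth_curve A c ->
  (\forall t \near 0, derivable (fun t : R => phi (c t)) t 1) /\
  derivable (derive1 (fun t : R => phi (c t))) 0 1.
Proof.
move=> [_ _ Hch Hcov _] sm [_ sc].
have [a Aa ya] := Hcov (c 0).
have [Uo Us] := sc a Aa.
have [Vo Vs] := sm a Aa.
have [_ _ Hinv _ _] := Hch a Aa.
set U := c @^-1` cdom a in Uo Us.
set V := cmap a @` cdom a in Vo Vs.
pose q := fun t : R => cmap a (c t).
have Usq : forall t v, U t -> derivable q t v.
  by move=> t v Ut; exact: (Us [::]).1.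
have Usq1 : derivable ('D_1 q) 0 1 by exact: (Us [:: 1]).1.
set F := phi \o cinv a in Vs.
have U0 : U 0 by [].
have qV : forall t, U t -> V (q t) by move=> t Ut; exists (c t) => //.
have Eq : forall t, U t -> phi (c t) = F (q t) by move=> t Ut; rewrite /F /q /= Hinv.
have dq : forall t, U t -> differentiable q t.
  by move=> t Ut; apply/derivable1_diffP; exact: Usq.
have dF : forall t i j, U t -> differentiable (fun u => F u i j : R) (q t).
  move=> t i j Ut; apply: (@compdiff _ _ V F) => //; first exact: qV.
  - by move=> u v Vu; exact: (Vs [::]).1.
  - by move=> l; exact: (Vs [:: ev l]).2.
have dDF : forall t l i j, U t ->
    differentiable (fun u => 'D_(ev l) F u i j : R) (q t).
  move=> t l i j Ut; apply: (@compdiff _ _ V ('D_(ev l) F)) => //; first exact: qV.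
  - by move=> u v Vu; exact: (Vs [:: ev l]).1.
  - by move=> l'; exact: (Vs [:: ev l'; ev l]).2.
pose p := fun t => F (q t).
have dp : forall t, U t -> derivable p t 1.
  move=> t Ut; apply/derivable_mxP => i j; apply/derivable1_diffP.
  exact: (differentiable_comp (dq t Ut) (dF t i j Ut)).
pose P2 := fun t => \matrix_(i < 1, j < n)
   (\sum_l derive1 q t 0 l * 'D_(ev l) F (q t) i j : R).
have EP2 : forall t, U t -> derive1 p t = P2 t.
  move=> t Ut; rewrite derive1E (derive_mx (dp t Ut)); apply/matrixP => i j.
  rewrite !mxE.
  have dc := differentiable_comp (dq t Ut) (dF t i j Ut).
  have E1 : 'd q t 1 = derive1 q t := esym (derive1E' (dq t Ut)).
  rewrite (deriveE _ dc) (diff_comp (dq t Ut) (dF t i j Ut)) /=.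
  have dl := dlin _ _ _ _ (derive1 q t) (dF t i j Ut).
  apply: (etrans (f_equal ('d (fun u => F u i j : R) (q t)) E1)).
  apply: (etrans dl); apply: eq_bigr => l _.
  have Hd : derivable F (q t) (ev l) by exact: ((Vs [::]).1 _ _ (qV t Ut)).
  by rewrite (derive_mx Hd) mxE.
have dP2 : derivable P2 0 1.
  apply/derivable_mxP => i0 j0.
  have -> : (fun t => P2 t i0 j0) =
      \sum_l (fun t => derive1 q t 0 l * 'D_(ev l) F (q t) i0 j0).
    by apply/funext => s0; rewrite /P2 mxE fct_sumE.
  apply: derivable_sum => l; apply: derivableM.
    have dq1 : derivable (derive1 q) 0 1.
      have -> : derive1 q = 'D_1 q by apply/funext => s0; rewrite derive1E.
      exact: Usq1.
    by move/derivable_mxP : dq1 => /(_ 0 l).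
  apply/derivable1_diffP.
  exact: (differentiable_comp (dq 0 U0) (dDF 0 l i0 j0 U0)).
have nU : \forall t \near (0 : R), U t := @open_near _ U 0 Uo U0.
have pcp : forall t1, U t1 -> {near t1, p =1 (fun t => phi (c t))}.
  move=> t1 Ut1; apply: filterS (@open_near _ U t1 Uo Ut1) => s1 Us1.
  by rewrite /p -Eq.
split.
  have := nU; apply: filterS => t1 Ut1.
  exact: near_eq_derivable (pcp t1 Ut1) (dp t1 Ut1).
apply: (@near_eq_derivable _ _ _ P2); last exact: dP2.
have := nU; apply: filterS => t1 Ut1.
rewrite -EP2 // !derive1E; apply: near_eq_derive.
exact: pcp.
Qed.

Lemma diff_quad (V W : normedModType R) (f : V -> W) (u : V)
  (L : {linear V -> W}) K :
  continuous L -> (forall h, `|f (h + u) - f u - L h| <= K * `|h| ^+ 2) ->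
  differentiable f u /\ 'd f u = L :> (V -> W).
Proof.
move=> Lc HK.
have Ho : f \o shift u = cst (f u) + L +o_ (0 : V) id.
  apply/eqaddoP => eps eps0.
  have e0 : 0 < eps / (`|K| + 1) by rewrite divr_gt0 // ltr_wpDl.
  apply/nbhs_ballP; exists (eps / (`|K| + 1)) => // h.
  rewrite -ball_normE /= sub0r normrN => hd.
  change (`|f (h + u) - (f u + L h)| <= eps * `|h|).
  rewrite opprD addrA; apply: (le_trans (HK h)).
  rewrite expr2 mulrA; apply: ler_wpM2r => //.
  apply: (@le_trans _ _ ((`|K| + 1) * `|h|)).
    by apply: ler_wpM2r => //; rewrite (le_trans (ler_norm K)) // lerDl.
  rewrite mulrC -ler_pdivlMr ?ltr_wpDl //; exact: ltW.
have dd := diff_unique Lc Ho.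
by split => //; apply/diff_locallyP; rewrite dd; split.
Qed.

Lemma lin_dotp n (c : 'rV[R]_n) :
  exists LL : {linear 'rV[R]_n -> R^o}, continuous LL /\ forall h, LL h = dotp c h.
Proof.
pose L := fun h : 'rV[R]_n => (\sum_l c 0 l * h 0 l : R^o).
have Llin : linear L.
  move=> a u v; rewrite /L scaler_sumr -big_split; apply: eq_bigr => l _ /=.
  rewrite !mxE mulrDr; congr (_ + _); rewrite mulrCA; done.
pose LM := GRing.isLinear.Build _ _ _ _ _ Llin.
pose LL : {linear 'rV[R]_n -> R^o} := HB.pack L LM.
exists LL; split; last by move=> h; rewrite dotpE.
move=> y; apply: differentiable_continuous.
have -> : (LL : _ -> _) = \sum_l (( *:%R (c 0 l)) \o (fun h : 'rV[R]_n => h 0 l)).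
  by apply/funext => h; rewrite /= /L fct_sumE.
apply: differentiable_sum => l; apply: differentiable_comp => //.
exact: differentiable_coord.
Qed.

Definition fa n (w x : 'rV[R]_n) (alpha : R) : 'rV[R]_n -> R^o :=
  fun y => dotp w y + alpha / 2 * dotp (y - x) (y - x).
Arguments fa {n} w x alpha.

Lemma dotp_le n (h : 'rV[R]_n) : `|dotp h h| <= n%:R * `|h| ^+ 2.
Proof.
rewrite dotpE; apply: (le_trans (ler_norm_sum _ _ _)).
rewrite -[n in n%:R]card_ord -sum1_card natr_sum mulr_suml.
apply: ler_sum => j _; rewrite mul1r normrM -expr2.
by apply: lerXn2r; rewrite ?nnegrE //; apply: rV_coord_le.
Qed.

Lemma fa_diff n (w x : 'rV[R]_n) alpha u :
  differentiable (fa w x alpha) u /\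
  forall v, 'd (fa w x alpha) u v = dotp (w + alpha *: (u - x)) v.
Proof.
have [LL [Lc LE]] := @lin_dotp _ (w + alpha *: (u - x)).
have := @diff_quad _ _ (fa w x alpha) u LL (`|alpha| / 2 * n%:R) Lc.
case.
  move=> h; rewrite LE.
  have -> : fa w x alpha (h + u) - fa w x alpha u - dotp (w + alpha *: (u - x)) h
            = alpha / 2 * dotp h h.
    rewrite /fa !dotpE !mulr_sumr -!big_split /= -!sumrB; apply: eq_bigr => j _; rewrite !mxE.
    move: (w 0 j) (h 0 j) (u 0 j) (x 0 j) => a b c d; by field.
  rewrite normrM; apply: (le_trans (ler_wpM2l (normr_ge0 _) (@dotp_le _ h))).
  by rewrite normrM (ger0_norm (x := 2^-1)) ?invr_ge0 ?ler0n // !mulrA.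
move=> df dE; split => // v; rewrite dE; exact: LE.
Qed.

Lemma grad_fa n (w x : 'rV[R]_n) alpha u :
  grad (fa w x alpha) u = w + alpha *: (u - x).
Proof.
apply/rowP => j; rewrite mxE (@fa_diff _ w x alpha u).2 dotpE (bigD1 j) //= big1.
  by rewrite !mxE !eqxx /= mulr1 addr0.
by move=> l lj; rewrite !mxE (negbTE lj) andbF /= mulr0.
Qed.

Lemma dgrad_fa n (w x : 'rV[R]_n) alpha u :
  differentiable (grad (fa w x alpha)) u /\
  forall v, 'd (grad (fa w x alpha)) u v = alpha *: v.
Proof.
have -> : grad (fa w x alpha) = fun u => w + alpha *: (u - x).
  by apply/funext => y; rewrite grad_fa.
have := @diff_quad _ _ (fun u => w + alpha *: (u - x)) u ( *:%R alpha) 0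
   (@scaler_continuous _ _ alpha).
case.
  move=> h.
  have -> : w + alpha *: (h + u - x) - (w + alpha *: (u - x)) - alpha *: h = 0.
    by apply/rowP => j; rewrite !mxE; ring.
  by rewrite normr0 mul0r.
by move=> df dE; split => // v; rewrite dE.
Qed.

Lemma sq_le_dotp n (v : 'rV[R]_n) i : v 0 i * v 0 i <= dotp v v.
Proof.
rewrite dotpE (bigD1 i) //= lerDl; apply: sumr_ge0 => j _.
by rewrite -expr2 sqr_ge0.
Qed.

Lemma dotpZ n (a : R) (u v : 'rV[R]_n) : dotp (a *: u) v = a * dotp u v.
Proof.
by rewrite !dotpE mulr_sumr; apply: eq_bigr => j _; rewrite mxE mulrA.
Qed.

Lemma hess_bound n (L : {linear 'rV[R]_n -> 'rV[R]_n}) :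
  exists2 alpha : R, 0 < alpha & forall v, dotp (L v) v <= alpha * dotp v v.
Proof.
pose C := \sum_i \sum_j `|L (ev j) 0 i|.
have C0 : 0 <= C by apply: sumr_ge0 => i _; apply: sumr_ge0 => j _.
exists (1 + C); first by rewrite ltr_wpDr.
move=> v.
have S0 : 0 <= dotp v v.
  by rewrite dotpE; apply: sumr_ge0 => i _; rewrite -expr2 sqr_ge0.
have Lv : forall i, L v 0 i = \sum_j v 0 j * L (ev j) 0 i.
  move=> i; rewrite {1}(row_sum_delta v) linear_sum summxE.
  by apply: eq_bigr => j _; rewrite linearZ mxE.
apply: (@le_trans _ _ (C * dotp v v)); last by rewrite mulrDl mul1r lerDr.
rewrite dotpE /C mulr_suml; apply: ler_sum => i _.
rewrite Lv mulr_suml mulr_suml; apply: ler_sum => j _.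
apply: (le_trans (ler_norm _)).
rewrite !normrM.
have Ai : `|v 0 i| * `|v 0 i| <= dotp v v by rewrite -normrM ger0_norm ?sq_le_dotp // -expr2 sqr_ge0.
have Aj : `|v 0 j| * `|v 0 j| <= dotp v v by rewrite -normrM ger0_norm ?sq_le_dotp // -expr2 sqr_ge0.
move: Ai Aj (normr_ge0 (v 0 i)) (normr_ge0 (v 0 j)) (normr_ge0 (L (ev j) 0 i)).
move: (`|v 0 i|) (`|v 0 j|) (dotp v v) (`|L (ev j) 0 i|) => a b S c Ha Hb a0 b0 c0.
have ab : a * b <= S by nra.
nra.
Qed.

End Helpers.

Theorem corollary3p18 (R : realType) (m n : nat) (M : topologicalType)
  (A : set (chart R m M)) (phi : M -> 'rV[R]_n) (y : M) :
  smooth_atlas A -> smooth_map A phi -> ~ two_implies_one A phi y ->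
  let x := phi y in
  let Tstar := dual_cone (tangent_cone (phi @` setT) x) in
  (exists w, W_set A phi y w /\ ~ Tstar w) /\
  (forall w, W_set A phi y w -> ~ Tstar w ->
     exists2 alpha : R, 0 < alpha &
       let f : 'rV[R]_n -> R^o :=
         fun x' => dotp w x' + alpha / 2 * dotp (x' - x) (x' - x) in
       two_critical A phi f y /\ ~ stationary (phi @` setT) f x).
Proof.
move=> sa sm nti x Tstar; split.
  have [[f [H1 H2 H3]]|Hno] := pselect (exists f : 'rV[R]_n -> R^o,
      [/\ twice_differentiable f, two_critical A phi f y &
          ~ stationary (phi @` setT) f (phi y)]).
    by exists (grad f (phi y)); split => //; exists f.
  exfalso; apply: nti => f H1 H2; apply: contrapT => H3; apply: Hno.
  by exists f.
move=> w [f0 [tf0 gw tc0]] nT.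
have [alpha a0 Hb] := @hess_bound R _ ('d (grad f0) x).
exists alpha; first exact: a0.
change (two_critical A phi (@fa R _ w x alpha) y /\
        ~ stationary (phi @` setT) (@fa R _ w x alpha) x).
have tfa : twice_differentiable (@fa R _ w x alpha).
  by split => u; [exact: (@fa_diff R _ w x alpha u).1 | exact: (@dgrad_fa R _ w x alpha u).1].
split; last first.
  by rewrite /stationary grad_fa subrr scaler0 addr0.
move=> c sc c0.
have [dp dp2] := @curve_rep R _ _ _ _ _ _ sa sm sc.
have [E1 E2] := @H2 R _ _ _ tfa dp dp2.
have [F1 F2] := @H2 R _ _ _ tf0 dp dp2.
have [T1 T2] := tc0 c sc c0.
have px : phi (c 0) = x by rewrite c0.
rewrite px grad_fa subrr scaler0 addr0 (@dgrad_fa R _ w x alpha x).2 dotpZ in E1 E2.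
rewrite px gw in F1 F2.
move=> h.
have -> : h = (fun t : R => @fa R _ w x alpha (phi (c t))) by [].
rewrite E1 E2 -F1; split; first exact: T1.
have H := Hb (derive1 (fun t : R => phi (c t)) 0).
move: T2; rewrite F2 => T2.
move: T2 H.
move: (dotp ('d (grad f0) x (derive1 (fun t : R => phi (c t)) 0))
            (derive1 (fun t : R => phi (c t)) 0)).
move: (dotp (derive1 (fun t : R => phi (c t)) 0) (derive1 (fun t : R => phi (c t)) 0)).
move: (dotp w (derive1 (derive1 (fun t : R => phi (c t))) 0)) => Q S P T2 H.
lra.
Qed.
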